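(* Let $\mathbb{G}$ be an $E$-group and $\alpha_1,\alpha_2,\beta\subsetneq E$, and suppose $\mathbb{G}[\alpha_1]$ and $\mathbb{G}[\alpha_2]$ are $2$-acyclic. Then for every vertex $x$ of the free amalgam $\mathrm{Cay}(\mathbb{G}[\alpha_1])\oplus\mathrm{Cay}(\mathbb{G}[\alpha_2])$, the $\beta$-connected component of $x$ is isomorphic, as an $E$-graph, either to $\mathrm{Cay}(\mathbb{G}[\beta\cap\alpha_1])$, or to $\mathrm{Cay}(\mathbb{G}[\beta\cap\alpha_2])$, or to the free amalgam $\mathrm{Cay}(\mathbb{G}[\beta\cap\alpha_1])\oplus\mathrm{Cay}(\mathbb{G}[\beta\cap\alpha_2])$.
   Context: Let $E$ be a finite set. An $E$-group is a group $\mathbb{G}$ with $E\subseteq\mathbb{G}$ generating it and each $e\in E$ satisfying $e\neq1$, $e^2=1$; $\mathbb{G}[\gamma]$ is the subgroup generated by $\gamma\subseteq E$, regarded as a $\gamma$-group. A coset cycle of length $n\ge2$ in a $\gamma$-group $\mathbb{K}$ is $(g_i,\gamma_i)_{i\in\mathbb{Z}_n}$ with $\gamma_i\subseteq\gamma$, $g_{i+1}\in g_i\mathbb{K}[\gamma_i]$ and $g_i\mathbb{K}[\gamma_i\cap\gamma_{i-1}]\cap g_{i+1}\mathbb{K}[\gamma_i\cap\gamma_{i+1}]=\emptyset$; $2$-acyclic means there is no coset cycle of length $2$. An $E$-graph is $(V,(R_e)_{e\in E})$ with each $R_e$ symmetric and each vertex having at most one $R_e$-neighbour; an isomorphism of $E$-graphs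 is a bijection preserving each $R_e$ in both directions. $\mathrm{Cay}(\mathbb{G}[\gamma])$ is the $E$-graph on $\mathbb{G}[\gamma]$ with $R_e=\{(g,ge)\}$ for $e\in\gamma$ and $R_e=\emptyset$ for $e\notin\gamma$. For $\gamma_1,\gamma_2\subseteq E$, the free amalgam $\mathrm{Cay}(\mathbb{G}[\gamma_1])\oplus\mathrm{Cay}(\mathbb{G}[\gamma_2])$ is the $E$-graph whose vertex set is the quotient of $(\mathbb{G}[\gamma_1]\times\{1\})\cup(\mathbb{G}[\gamma_2]\times\{2\})$ obtained by identifying $(g,1)$ with $(g,2)$ for all $g\in\mathbb{G}[\gamma_1\cap\gamma_2]$, and whose $R_e$ is the image of $\bigcup_{i:e\in\gamma_i}\{((g,i),(ge,i)):g\in\mathbb{G}[\gamma_i]\}$. For $\beta\subseteq E$, the $\beta$-connected component of a vertex $x$ is the set of vertices reachable from $x$ along edges in $R_e$ with $e\in\beta$, with the induced $R_e$ for $e\in\beta$ and $R_e=\emptyset$ for $e\notin\beta$. *)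

(* Defs.v *)
(* the E-group itself is an arbitrary (possibly infinite) group, given as a record. *)
From Stdlib Require Import Relations.
From mathcomp Require Import all_boot.
Set Implicit Arguments. Unset Strict Implicit. Unset Printing Implicit Defensive.

Record abs_group := AbsGroup {
  gcar :> Type;
  gmul : gcar -> gcar -> gcar;
  gone : gcar;
  ginv : gcar -> gcar;
  gmulA : forall x y z, gmul x (gmul y z) = gmul (gmul x y) z;
  gmul1g : forall x, gmul gone x = x;
  gmulVg : forall x, gmul (ginv x) x = gone
}.

Section EGroups.
Variables (G : abs_group) (E : finType) (emb : E -> G).

Inductive gen (gam : {set E}) : G -> Prop :=
  | gen1 : gen gam (gone G)
  | genE e : e \in gam -> gen gam (emb e)
  | genM x y : gen gam x -> gen gam y -> gen gam (gmul x y)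
  | genV x : gen gam x -> gen gam (ginv x).

Definition is_Egroup : Prop :=
  [/\ injective emb,
      (forall e, emb e <> gone G),
      (forall e, gmul (emb e) (emb e) = gone G) &
      (forall g : G, gen setT g) ].

Definition in_coset (g : G) (gam : {set E}) (x : G) : Prop :=
  exists2 k, gen gam k & x = gmul g k.

(* A coset cycle of length n in the alpha-group G[alpha]
   (for gam \subset alpha, G[alpha][gam] = G[gam]); indices mod n. *)
Definition coset_cycle (alpha : {set E}) (n : nat)
    (g : nat -> G) (gam : nat -> {set E}) : Prop :=
  2 <= n /\
  forall i, i < n ->
    [/\ gen alpha (g i),
        gam i \subset alpha,
        in_coset (g i) (gam i) (g ((i + 1) %% n)) &
        forall x, ~ (in_coset (g i) (gam i :&: gam ((i + n - 1) %% n)) x /\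
                     in_coset (g ((i + 1) %% n)) (gam i :&: gam ((i + 1) %% n)) x)].

Definition two_acyclic (alpha : {set E}) : Prop :=
  ~ exists g gam, coset_cycle alpha 2 g gam.

(* E-graphs presented as setoids: carrier, vertex domain, equality of vertices
   (to present quotients), and the edge relations R_e. *)
Record egraph := EGraph {
  vtx : Type;
  vdom : vtx -> Prop;
  veq : vtx -> vtx -> Prop;
  edge : E -> vtx -> vtx -> Prop
}.
Arguments vdom : clear implicits.
Arguments veq : clear implicits.
Arguments edge : clear implicits.

Definition egraph_iso (A B : egraph) : Prop :=
  exists f : vtx A -> vtx B,
    [/\ (forall x, vdom A x -> vdom B (f x)),
        (forall x y, vdom A x -> vdom A y -> (veq A x y <-> veq B (f x) (f y))),
        (forall y, vdom B y -> exists2 x, vdom A x & veq B (f x) y) &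
        (forall e x y, vdom A x -> vdom A y ->
           (edge A e x y <-> edge B e (f x) (f y)))].

Definition Cay (gam : {set E}) : egraph :=
  @EGraph G (gen gam) (@eq G)
    (fun e g h => [/\ e \in gam, gen gam g & h = gmul g (emb e)]).

(* free amalgam Cay(G[g1]) (+) Cay(G[g2]); the tag true = copy 1, false = copy 2 *)
Definition side (g1 g2 : {set E}) (b : bool) := if b then g1 else g2.

Definition amal_dom (g1 g2 : {set E}) (v : G * bool) : Prop :=
  gen (side g1 g2 v.2) v.1.

Definition amal_eq (g1 g2 : {set E}) (v w : G * bool) : Prop :=
  [/\ amal_dom g1 g2 v, amal_dom g1 g2 w &
      (v = w \/ (v.1 = w.1 /\ gen (g1 :&: g2) v.1))].

Definition amalgam (g1 g2 : {set E}) : egraph :=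
  @EGraph (G * bool)%type (amal_dom g1 g2) (amal_eq g1 g2)
    (fun e v w => exists b, exists2 g : G,
        e \in side g1 g2 b /\ gen (side g1 g2 b) g &
        amal_eq g1 g2 v (g, b) /\ amal_eq g1 g2 w (gmul g (emb e), b)).

Definition comp_step (A : egraph) (beta : {set E}) (v w : vtx A) : Prop :=
  veq A v w \/ exists2 e, e \in beta & edge A e v w.

Definition comp_dom (A : egraph) (beta : {set E}) (x : vtx A) (v : vtx A) : Prop :=
  vdom A v /\ clos_refl_trans _ (@comp_step A beta) x v.

Definition component (A : egraph) (beta : {set E}) (x : vtx A) : egraph :=
  @EGraph (vtx A) (comp_dom beta x) (veq A)
    (fun e v w => [/\ e \in beta, edge A e v w, comp_dom beta x v & comp_dom beta x w]).

End EGroups.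
Arguments vdom {E}.
Arguments veq {E}.
Arguments edge {E}.
Arguments component {E} A beta x.

(* Main.v *)
Require Import Defs.
From mathcomp Require Import all_boot.
From Stdlib Require Import Classical Relations.
Set Implicit Arguments. Unset Strict Implicit.

Section Grp.
Variable G : abs_group.
Implicit Types x y z : G.

Lemma Gmulgv x : gmul x (ginv x) = gone G.
Proof.
have e: gmul x (ginv x) = gmul (gmul (ginv (ginv x)) (ginv x)) (gmul x (ginv x)).
  by rewrite gmulVg gmul1g.
by rewrite e -gmulA (gmulA (ginv x) x) gmulVg gmul1g gmulVg.
Qed.

Lemma Gmulg1 x : gmul x (gone G) = x.
Proof. by rewrite -(gmulVg x) gmulA Gmulgv gmul1g. Qed.

Lemma GmulKg x y : gmul (ginv x) (gmul x y) = y.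
Proof. by rewrite gmulA gmulVg gmul1g. Qed.

Lemma GmulKVg x y : gmul x (gmul (ginv x) y) = y.
Proof. by rewrite gmulA Gmulgv gmul1g. Qed.

Lemma Gcancel x y z : gmul x y = gmul x z -> y = z.
Proof. by move=> e; rewrite -(GmulKg x y) e GmulKg. Qed.
End Grp.

Section Gen.
Variables (G : abs_group) (E : finType) (emb : E -> G).

Lemma gen_sub (a b : {set E}) x : a \subset b -> gen emb a x -> gen emb b x.
Proof.
move=> sab; elim=> *; [exact: gen1 | apply: genE; exact: (subsetP sab) | exact: genM | exact: genV].
Qed.

Lemma acyc (al c0 c1 : {set E}) h : two_acyclic emb al ->
  c0 \subset al -> c1 \subset al -> gen emb c0 h -> gen emb c1 h -> gen emb (c0 :&: c1) h.
Proof.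
move=> Hac s0 s1 g0 g1; apply: NNPP => nh; apply: Hac.
exists (fun i => if i is 0 then gone G else h), (fun i => if i is 0 then c0 else c1).
split=> // i; case: i => [|[|i]] // _ /=; split => //.
- exact: gen1.
- by exists h => //; rewrite gmul1g.
- move=> y [[k1 Hk1 ->] [k2 Hk2 e]]; apply: nh.
  rewrite gmul1g in e.
  have -> : h = gmul k1 (ginv k2) by rewrite e -gmulA Gmulgv Gmulg1.
  by apply: genM => //; apply: genV.
- exact: gen_sub g0.
- by exists (ginv h); [apply: genV | rewrite Gmulgv].
- rewrite setIC => y [[k1 Hk1 e] [k2 Hk2 e2]]; apply: nh.
  rewrite gmul1g in e2; rewrite e2 in e.
  have -> : h = gmul k2 (ginv k1) by rewrite e -gmulA Gmulgv Gmulg1.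
  by apply: genM => //; apply: genV.
Qed.
End Gen.

Lemma Ginv_mul (G : abs_group) (x y : G) : ginv (gmul x y) = gmul (ginv y) (ginv x).
Proof.
apply: (@Gcancel _ (gmul x y)); rewrite Gmulgv -gmulA (gmulA y) Gmulgv gmul1g Gmulgv //.
Qed.

Section Main.
Variables (G : abs_group) (E : finType) (emb : E -> G).
Hypothesis Hinv : forall e, gmul (emb e) (emb e) = gone G.
Variables alpha1 alpha2 beta : {set E}.
Hypotheses (Hac1 : two_acyclic emb alpha1) (Hac2 : two_acyclic emb alpha2).

Local Notation A := (amalgam emb alpha1 alpha2).
Local Notation sa := (side alpha1 alpha2).
Definition gam b := side (beta :&: alpha1) (beta :&: alpha2) b.
Local Notation I := (alpha1 :&: alpha2).
Local Notation aeq := (amal_eq emb alpha1 alpha2).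
Local Notation step := (@comp_step _ A beta).

Lemma gam_sub b : gam b \subset sa b.
Proof. by case: b; apply/subsetP=> e; rewrite !inE /= => /andP[]. Qed.
Lemma gamP b e : e \in gam b -> e \in beta /\ e \in sa b.
Proof. by case: b; rewrite !inE /= => /andP[]. Qed.
Lemma I_sub b : I \subset sa b.
Proof. by case: b; apply/subsetP=> e; rewrite !inE /= => /andP[]. Qed.
Lemma gamI_sub b b' : gam b :&: I \subset gam b'.
Proof.
apply/subsetP=> e; case: b; case: b'; rewrite /gam /= !inE;
 case: (e \in beta); case: (e \in alpha1); case: (e \in alpha2) => //.
Qed.
Lemma gamI_sub2 b : gam b :&: I \subset gam true :&: gam false.
Proof.
apply/subsetP=> e; case: b; rewrite /gam /= !inE;
 case: (e \in beta); case: (e \in alpha1); case: (e \in alpha2) => //.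
Qed.
Lemma gam12_sub : gam true :&: gam false \subset I.
Proof.
apply/subsetP=> e; rewrite /gam /= !inE;
 case: (e \in beta); case: (e \in alpha1); case: (e \in alpha2) => //.
Qed.
Lemma acyc_side b : two_acyclic emb (sa b).
Proof. by case: b. Qed.

Lemma aeq_sym v w : aeq v w -> aeq w v.
Proof.
case=> d1 d2 [->|[e1 ge]]; first by split=> //; left.
by split=> //; right; rewrite -e1.
Qed.
Lemma aeq_refl v : amal_dom emb alpha1 alpha2 v -> aeq v v.
Proof. by move=> d; split=> //; left. Qed.

Lemma step_sym v w : step v w -> step w v.
Proof.
case=> [e|[e eb [b [g [eside gg] [e1 e2]]]]]; first by left; apply: aeq_sym.
right; exists e => //; exists b, (gmul g (emb e)); split => //.
  by apply: genM => //; apply: genE.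
by rewrite -gmulA Hinv Gmulg1.
Qed.

Definition reach x v := clos_refl_trans _ step x v.

Lemma reach_step x v w : reach x v -> step v w -> reach x w.
Proof. by move=> r s; apply: rt_trans r (rt_step _ _ _ _ s). Qed.

Lemma rt_inv (P : G * bool -> Prop) :
  (forall u w, P u -> step u w -> P w) ->
  forall u v, clos_refl_trans _ step u v -> P u -> P v.
Proof. by move=> HP u v; elim=> //; eauto. Qed.

Lemma edge_step b g e : e \in gam b -> gen emb (sa b) g ->
  step (g, b) (gmul g (emb e), b).
Proof.
move=> /[dup] eg /gamP [eb es] gg.
have gg' : gen emb (sa b) (gmul g (emb e)) by apply: genM => //; apply: genE.
right; exists e => //; exists b; exists g; first by [].
by split; split => //; left.
Qed.

Lemma claim x b k : gen emb (gam b) k -> forall g, gen emb (sa b) g ->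
  (reach x (g, b) <-> reach x (gmul g k, b)).
Proof.
have sub := gam_sub b.
elim=> {k} [|e eg|k1 k2 g1 IH1 g2 IH2|k gk IH] g gg.
- by rewrite Gmulg1.
- split=> r; first by apply: reach_step r (edge_step eg gg).
  apply: reach_step r _; apply: step_sym; exact: edge_step.
- have gk1 : gen emb (sa b) (gmul g k1) by apply: genM => //; apply: gen_sub g1.
  by rewrite gmulA -(IH2 _ gk1) IH1.
- have gk1 : gen emb (sa b) (gmul g (ginv k)) by apply: genM => //; apply: genV; apply: gen_sub gk.
  by rewrite (IH _ gk1) -gmulA gmulVg Gmulg1.
Qed.


Lemma gamI b e : e \in beta -> e \in sa b -> e \in gam b.
Proof. by case: b; rewrite /gam /= !inE => -> ->. Qed.

Definition meet g0 b0 := exists k, gen emb (gam b0) k /\ gen emb I (gmul g0 k).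

Lemma case1 g0 b0 : gen emb (sa b0) g0 -> ~ meet g0 b0 ->
  egraph_iso (component A beta (g0,b0)) (Cay emb (gam b0)).
Proof.
move=> Hg nm.
pose inv1 := fun v : G * bool => v.2 = b0 /\ gen emb (gam b0) (gmul (ginv g0) v.1).
have noI : forall v, inv1 v -> ~ gen emb I v.1.
  move=> [g b] [_ gk] gI; apply: nm; exists (gmul (ginv g0) g); split => //.
  by rewrite GmulKVg.
have aeqI : forall u w, inv1 u -> aeq u w -> w = u.
  move=> u w iu [_ _ [-> //|[e1 gI]]]; by case: (noI u iu).
have st : forall u w, inv1 u -> step u w -> inv1 w.
  move=> u w iu [/(aeqI _ _ iu) -> //|[e eb [b [g [es gg] [e1 e2]]]]].
  have eu := aeqI _ _ iu e1; rewrite -eu in iu; case: iu => /= bb gk.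
  have iw : inv1 (gmul g (emb e), b).
    split=> //=; rewrite gmulA; apply: genM => //; apply: genE; rewrite -bb; exact: gamI.
  by rewrite (aeqI _ _ iw (aeq_sym e2)).
have inv_reach : forall v, reach (g0,b0) v -> inv1 v.
  move=> v r; apply: (rt_inv st r); split => //=; rewrite gmulVg; exact: gen1.
exists (fun v : G * bool => gmul (ginv g0) v.1); split.
- by move=> v [_ /inv_reach []].
- move=> u v [du /inv_reach iu] [dv /inv_reach iv]; split.
  + by move=> /(aeqI _ _ iu) ->.
  + move=> /Gcancel e.
    have -> : u = v by case: u v iu iv e {du dv} => [g b] [g' b'] [e1 _] [e2 _] /= ->; rewrite /= in e1 e2; rewrite e1 e2.
    exact: aeq_refl.
- move=> y gy; exists (gmul g0 y, b0); last by rewrite /= GmulKg.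
  have gd : gen emb (sa b0) (gmul g0 y) by apply: genM => //; apply: gen_sub (gam_sub b0) gy.
  split => //; exact: (proj1 (claim _ gy Hg) (rt_refl _ _ _)).
- move=> e u v cu cv; have [du /inv_reach iu] := cu; have [dv /inv_reach iv] := cv; split.
  + case=> eb [b [g [es gg] [e1 e2]]] _ _.
    have eu := aeqI _ _ iu e1; rewrite -eu in iu; case: iu => /= bb gk.
    have vg : v.1 = gmul g (emb e) by case: e2 => _ _ [-> //|[-> _]].
    rewrite -eu /= vg gmulA; split => //; rewrite -bb; exact: gamI.
  + case=> egam gfu fv; have [eb es] := gamP egam; split => //.
    case: u cu du iu fv gfu => g b cu du [/= bb gu] fv gfu; subst b.
    exists b0; exists g; first by split.
    split; first exact: aeq_refl.
    case: v cv dv iv fv => g' b' cv dv [/= eb' _]; rewrite -gmulA => /Gcancel eg.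
    subst b' g'; exact: aeq_refl dv.
Qed.


Lemma case2 g0 b0 k0 : gen emb (sa b0) g0 -> gen emb (gam b0) k0 -> gen emb I (gmul g0 k0) ->
  egraph_iso (component A beta (g0,b0)) (amalgam emb (gam true) (gam false)).
Proof.
move=> Hg Hk0; set h := gmul g0 k0 => Hh.
pose inv2 := fun v : G * bool => gen emb (gam v.2) (gmul (ginv h) v.1).
pose f := fun v : G * bool => (gmul (ginv h) v.1, v.2).
have key : forall g b, gen emb I g -> inv2 (g,b) -> gen emb (gam b :&: I) (gmul (ginv h) g).
  move=> g b gI ig; have ig' : gen emb (gam b) (gmul (ginv h) g) := ig.
  apply: (acyc (@acyc_side b) (gam_sub b) (I_sub b) ig').
  by apply: genM => //; apply: genV.
have inv_eq : forall u w, inv2 u -> aeq u w -> inv2 w.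
  move=> [g b] w iu [_ _ [<- //|[/= e1 gI]]].
  case: w e1 => g' b' /= e1; rewrite -e1; apply: gen_sub (gamI_sub b b') _; exact: key.
have st : forall u w, inv2 u -> step u w -> inv2 w.
  move=> u w iu [/(inv_eq _ _ iu) //|[e eb [b [g [es gg] [e1 e2]]]]].
  have ig := inv_eq _ _ iu e1.
  apply: (inv_eq _ _ _ (aeq_sym e2)) ; rewrite /inv2 /= gmulA; apply: genM => //; apply: genE.
  exact: gamI.
have r0 : forall b, reach (g0,b0) (h,b).
  move=> b; have r1 : reach (g0,b0) (h,b0) := proj1 (claim _ Hk0 Hg) (rt_refl _ _ _).
  apply: reach_step r1 _; left; split; [exact: gen_sub (I_sub b0) Hh| exact: gen_sub (I_sub b) Hh|].
  by right; split.
have inv_reach : forall v, reach (g0,b0) v -> inv2 v.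
  move=> v r; apply: (rt_inv st r) => /=.
  by rewrite /inv2 /h /= Ginv_mul -gmulA gmulVg Gmulg1; apply: genV.
have fveq : forall u v, inv2 u -> inv2 v -> amal_dom emb alpha1 alpha2 u ->
    amal_dom emb alpha1 alpha2 v ->
    (aeq u v <-> amal_eq emb (gam true) (gam false) (f u) (f v)).
  move=> [g b] [g' b'] iu iv du dv; split.
  - case=> _ _ [[<- <-]|[/= e1 gI]]; split => //; first by left.
    right; split; first by rewrite /= e1.
    apply: gen_sub (gamI_sub2 b) _; exact: key.
  - case=> _ _ [[/Gcancel <- <-]|[/= /Gcancel e1 gI]]; split => //; first by left.
    right; split => //=; rewrite -(GmulKVg h g); apply: genM => //; exact: gen_sub gam12_sub gI.
exists f; split.
- by move=> v [_ /inv_reach].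
- move=> u v [du /inv_reach iu] [dv /inv_reach iv]; exact: fveq.
- move=> [k b] gk; exists (gmul h k, b).
  + have dd : gen emb (sa b) (gmul h k).
      by apply: genM; [exact: gen_sub (I_sub b) Hh | exact: gen_sub (gam_sub b) gk].
    split => //; exact: (proj1 (claim (g0,b0) gk (gen_sub (I_sub b) Hh)) (r0 b)).
  + by rewrite /f /= GmulKg; split; [exact: gk|exact: gk|left].
- move=> e u v cu cv; have [du /inv_reach iu] := cu; have [dv /inv_reach iv] := cv; split.
  + case=> eb [b [g [es gg] [e1 e2]]] _ _.
    have ig := inv_eq _ _ iu e1.
    have gge : gen emb (sa b) (gmul g (emb e)) by apply: genM => //; apply: genE.
    have ige : inv2 (gmul g (emb e), b).
      by rewrite /inv2 /= gmulA; apply: genM => //; apply: genE; exact: gamI.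
    exists b; exists (gmul (ginv h) g); first by split => //; exact: gamI.
    split; first exact: (proj1 (fveq u (g,b) iu ig du gg) e1).
    rewrite -gmulA; exact: (proj1 (fveq v _ iv ige dv gge) e2).
  + case=> [b [g' [egam gg'] [e1 e2]]].
    have [eb es] := gamP egam; split => //.
    have dp : gen emb (sa b) (gmul h g').
      by apply: genM; [exact: gen_sub (I_sub b) Hh | exact: gen_sub (gam_sub b) gg'].
    have dq : gen emb (sa b) (gmul (gmul h g') (emb e)) by apply: genM => //; apply: genE.
    have ip : inv2 (gmul h g', b) by rewrite /inv2 /= GmulKg.
    have iq : inv2 (gmul (gmul h g') (emb e), b).
      by rewrite /inv2 /= -gmulA GmulKg; apply: genM => //; apply: genE.
    exists b; exists (gmul h g'); first by split.
    split.
    * apply: (proj2 (fveq u _ iu ip du dp)); rewrite /f /= GmulKg; exact: e1.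
    * apply: (proj2 (fveq v _ iv iq dv dq)); rewrite /f /= -gmulA GmulKg; exact: e2.
Qed.

End Main.

Theorem mainTheorem10 (G : abs_group) (E : finType) (emb : E -> G)
    (HG : is_Egroup emb) (alpha1 alpha2 beta : {set E})
    (Ha1 : alpha1 \proper [set: E]) (Ha2 : alpha2 \proper [set: E])
    (Hb : beta \proper [set: E])
    (Hac1 : two_acyclic emb alpha1) (Hac2 : two_acyclic emb alpha2)
    (x : G * bool) (Hx : vdom (amalgam emb alpha1 alpha2) x) :
  let C := component (amalgam emb alpha1 alpha2) beta x in
  egraph_iso C (Cay emb (beta :&: alpha1)) \/
  egraph_iso C (Cay emb (beta :&: alpha2)) \/
  egraph_iso C (amalgam emb (beta :&: alpha1) (beta :&: alpha2)).
Proof.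
cbv zeta; case: HG => _ _ Hinv _.
case: x Hx => g0 b0 Hx0.
have Hg : gen emb (side alpha1 alpha2 b0) g0 := Hx0.
case: (classic (meet emb alpha1 alpha2 beta g0 b0)) => [[k0 [Hk0 HI]]|nm].
- right; right; exact: (case2 Hinv Hac1 Hac2 Hg Hk0 HI).
- case: b0 Hx0 Hg nm => Hx0 Hg nm; [left|right;left]; exact: (case1 Hinv Hg nm).
Qed.
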